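(* There exists an absolute constant $L$ such that for all $\omega=(\alpha^+,\alpha^-,\gamma_1,\delta)$ and $\tilde\omega=(\tilde\alpha^+,\tilde\alpha^-,\tilde\gamma_1,\tilde\delta)$ in $\hat\Omega$ and all $z\in\mathbb{C}$, $$\left|\mathsf{E}_\omega(z)-\mathsf{E}_{\tilde\omega}(z)\right|\le e^{|\gamma_1||z|+5\delta|z|^2}\left(e^{|\gamma_1-\tilde\gamma_1||z|+\frac{|\delta-\tilde\delta|}{2}|z|^2}-1\right)+|z|\left(\sum_{i\ge1}\left[|\alpha_i^+-\tilde\alpha_i^+|^3+|\alpha_i^--\tilde\alpha_i^-|^3\right]\right)^{1/3}e^{|\tilde\gamma_1||z|+\frac{\tilde\delta}{2}|z|^2+L\left(|z|(\delta^{1/2}+\tilde\delta^{1/2})+1\right)^3}.$$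
   Context: $\hat\Omega$ is the set of $(\alpha^+,\alpha^-,\gamma_1,\delta)$ with $\alpha^\pm=(\alpha_1^\pm\ge\alpha_2^\pm\ge\dots\ge0)$ non-increasing sequences of non-negative reals, $\gamma_1\in\mathbb{R}$, $\delta\ge0$, and $\sum_i(\alpha_i^+)^2+\sum_i(\alpha_i^-)^2\le\delta$. For such a point set $\gamma_2=\delta-\sum_i(\alpha_i^+)^2-\sum_i(\alpha_i^-)^2$ and $$\mathsf{E}_\omega(z)=e^{-\gamma_1 z-\frac{\gamma_2}{2}z^2}\prod_{i\ge1}e^{z\alpha_i^+}(1-z\alpha_i^+)\prod_{i\ge1}e^{-z\alpha_i^-}(1+z\alpha_i^-).$$ *)

(* Defs.v *)
From Stdlib Require Import Reals.
From Coquelicot Require Import Coquelicot.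
Open Scope R_scope.

Definition Cexp (z : C) : C :=
  (exp (Re z) * cos (Im z), exp (Re z) * sin (Im z)).

(* Limit of a complex sequence, taken componentwise (total: meaningful
   when the sequence converges). *)
Definition Clim_seq (u : nat -> C) : C :=
  (real (Lim_seq (fun n => Re (u n))), real (Lim_seq (fun n => Im (u n)))).

(* A point omega = (alpha^+, alpha^-, gamma_1, delta); the sequences are
   indexed from 0, i.e. [ap i] stands for alpha^+_{i+1}. *)
Record omega := mkOmega {
  ap : nat -> R;
  am : nat -> R;
  g1 : R;
  dl : R
}.

Definition nonincr_nonneg (a : nat -> R) : Prop :=
  (forall i, 0 <= a i) /\ (forall i, a (S i) <= a i).

(* Membership in Omega-hat: sum_i (alpha^+_i)^2 + sum_i (alpha^-_i)^2 <= delta,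
   stated for all partial sums (the terms are nonnegative). *)
Definition in_Omega_hat (w : omega) : Prop :=
  nonincr_nonneg (ap w) /\ nonincr_nonneg (am w) /\ 0 <= dl w /\
  forall N, sum_n (fun i => (ap w i) ^ 2 + (am w i) ^ 2) N <= dl w.

Definition g2 (w : omega) : R :=
  dl w - Series (fun i => (ap w i) ^ 2) - Series (fun i => (am w i) ^ 2).

Definition Efactor (a b : R) (z : C) : C :=
  Cmult (Cmult (Cexp (Cmult z (RtoC a))) (Cminus (RtoC 1) (Cmult z (RtoC a))))
        (Cmult (Cexp (Copp (Cmult z (RtoC b)))) (Cplus (RtoC 1) (Cmult z (RtoC b)))).

Fixpoint Eprod (w : omega) (z : C) (N : nat) : C :=
  match N with
  | O => RtoC 1
  | S n => Cmult (Eprod w z n) (Efactor (ap w n) (am w n) z)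
  end.

Definition E (w : omega) (z : C) : C :=
  Cmult (Cexp (Cminus (Copp (Cmult (RtoC (g1 w)) z))
                      (Cmult (RtoC (g2 w / 2)) (Cmult z z))))
        (Clim_seq (Eprod w z)).

Definition cbrt (x : R) : R := if Rle_dec x 0 then 0 else Rpower x (1 / 3).

(* Main.v *)
Require Import Defs.
From Stdlib Require Import Reals Lra Psatz.
From Coquelicot Require Import Coquelicot.
Open Scope R_scope.

Lemma Cexp_add (a b : C) : Cexp (a + b)%C = (Cexp a * Cexp b)%C.
Proof.
  destruct a as [a1 a2], b as [b1 b2].
  unfold Cexp, Cplus, Cmult; simpl.
  rewrite exp_plus, cos_plus, sin_plus. apply injective_projections; simpl; ring.
Qed.

Lemma Cexp_0 : Cexp (RtoC 0) = RtoC 1.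
Proof. unfold Cexp; simpl. rewrite exp_0, cos_0, sin_0. apply injective_projections; simpl; ring. Qed.

Lemma Cmod_Cexp (a : C) : Cmod (Cexp a) = exp (Re a).
Proof.
  destruct a as [x y]. unfold Cmod, Cexp, Re, Im; cbn [fst snd].
  replace ((exp x * cos y) ^ 2 + (exp x * sin y) ^ 2)
    with (exp x ^ 2) by (assert (H := sin2_cos2 y); unfold Rsqr in H; transitivity (exp x ^ 2 * (sin y * sin y + cos y * cos y)); [rewrite H; ring | ring]).
  apply sqrt_pow2. apply Rlt_le, exp_pos.
Qed.

Lemma Re_le_Cmod (a : C) : Re a <= Cmod a.
Proof. generalize (re_le_Cmod a). generalize (Rle_abs (Re a)). lra. Qed.

Definition CD (f : R -> C) (t : R) (l : C) : Prop :=
  is_derive (fun s => Re (f s)) t (Re l) /\ is_derive (fun s => Im (f s)) t (Im l).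

Lemma CD_const (c : C) t : CD (fun _ => c) t 0%C.
Proof. unfold CD, Re, Im; split; simpl; auto_derive; auto. Qed.

Lemma CD_lin (c : C) t : CD (fun s => (c * RtoC s)%C) t c.
Proof.
  unfold CD, Re, Im; split; simpl; auto_derive; auto; ring.
Qed.

Lemma CD_plus f g t lf lg : CD f t lf -> CD g t lg ->
  CD (fun s => f s + g s)%C t (lf + lg)%C.
Proof.
  intros [H1 H2] [H3 H4]; split; simpl.
  - apply (is_derive_plus _ _ _ _ _ H1 H3).
  - apply (is_derive_plus _ _ _ _ _ H2 H4).
Qed.

Lemma CD_mult f g t lf lg : CD f t lf -> CD g t lg ->
  CD (fun s => f s * g s)%C t (lf * g t + f t * lg)%C.
Proof.
  intros [H1 H2] [H3 H4]; split.
  - apply is_derive_ext with (f := fun s => Re (f s) * Re (g s) - Im (f s) * Im (g s)).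
    { intro s; unfold Re, Im; simpl; ring. }
    replace (Re (lf * g t + f t * lg)%C) with
      ((Re lf * Re (g t) + Re (f t) * Re lg) - (Im lf * Im (g t) + Im (f t) * Im lg))
      by (unfold Re, Im; simpl; ring).
    apply (is_derive_minus (fun s => Re (f s) * Re (g s)) (fun s => Im (f s) * Im (g s))).
    + apply (is_derive_mult (fun s => Re (f s)) (fun s => Re (g s))); auto.
      intros; apply Rmult_comm.
    + apply (is_derive_mult (fun s => Im (f s)) (fun s => Im (g s))); auto.
      intros; apply Rmult_comm.
  - apply is_derive_ext with (f := fun s => Re (f s) * Im (g s) + Im (f s) * Re (g s)).
    { intro s; unfold Re, Im; simpl; ring. }
    replace (Im (lf * g t + f t * lg)%C) with
      ((Re lf * Im (g t) + Re (f t) * Im lg) + (Im lf * Re (g t) + Im (f t) * Re lg))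
      by (unfold Re, Im; simpl; ring).
    apply (is_derive_plus (fun s => Re (f s) * Im (g s)) (fun s => Im (f s) * Re (g s))).
    + apply (is_derive_mult (fun s => Re (f s)) (fun s => Im (g s))); auto.
      intros; apply Rmult_comm.
    + apply (is_derive_mult (fun s => Im (f s)) (fun s => Re (g s))); auto.
      intros; apply Rmult_comm.
Qed.

Lemma CD_exp f t lf : CD f t lf -> CD (fun s => Cexp (f s)) t (Cexp (f t) * lf)%C.
Proof.
  intros [H1 H2]; split.
  - apply is_derive_ext with (f := fun s => exp (Re (f s)) * cos (Im (f s))).
    { intro s; unfold Cexp, Re, Im; simpl; ring. }
    replace (Re (Cexp (f t) * lf)%C) with
      (Re lf * exp (Re (f t)) * cos (Im (f t)) + exp (Re (f t)) * (Im lf * - sin (Im (f t))))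
      by (unfold Cexp, Re, Im; simpl; ring).
    apply (is_derive_mult (fun s => exp (Re (f s))) (fun s => cos (Im (f s)))).
    + apply (is_derive_comp exp (fun s => Re (f s))); auto. apply is_derive_Reals, derivable_pt_lim_exp.
    +       apply (is_derive_comp cos (fun s => Im (f s))); auto. apply is_derive_Reals, derivable_pt_lim_cos.
    + intros; apply Rmult_comm.
  - apply is_derive_ext with (f := fun s => exp (Re (f s)) * sin (Im (f s))).
    { intro s; unfold Cexp, Re, Im; simpl; ring. }
    replace (Im (Cexp (f t) * lf)%C) with
      (Re lf * exp (Re (f t)) * sin (Im (f t)) + exp (Re (f t)) * (Im lf * cos (Im (f t))))
      by (unfold Cexp, Re, Im; simpl; ring).
    apply (is_derive_mult (fun s => exp (Re (f s))) (fun s => sin (Im (f s)))).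
    + apply (is_derive_comp exp (fun s => Re (f s))); auto. apply is_derive_Reals, derivable_pt_lim_exp.
    +       apply (is_derive_comp sin (fun s => Im (f s))); auto. apply is_derive_Reals, derivable_pt_lim_sin.
    + intros; apply Rmult_comm.
Qed.

Lemma exp_mono x y : x <= y -> exp x <= exp y.
Proof. intros [H|H]; [apply Rlt_le, exp_increasing; auto | subst; lra]. Qed.

Lemma Re_conj_mult (d w : C) : Re (Cconj d * w)%C = Re d * Re w + Im d * Im w.
Proof. destruct d, w; unfold Re, Im, Cconj; simpl; ring. Qed.

Lemma cmvt (f f' : R -> C) (G G' : R -> R) s0 s1 :
  s0 <= s1 ->
  (forall t, CD f t (f' t)) -> (forall t, is_derive G t (G' t)) ->
  (forall t, s0 <= t <= s1 -> Cmod (f' t) <= G' t) ->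
  Cmod (f s1 - f s0)%C <= G s1 - G s0.
Proof.
  intros Hs Hf HG Hb.
  set (d := (f s1 - f s0)%C).
  set (h := fun t => Re d * Re (f t) + Im d * Im (f t) - Cmod d * G t).
  set (h' := fun t => Re d * Re (f' t) + Im d * Im (f' t) - Cmod d * G' t).
  assert (Hh : forall t, is_derive h t (h' t)).
  { intro t. destruct (Hf t) as [H1 H2]. unfold h, h'.
    apply (is_derive_minus (fun t => Re d * Re (f t) + Im d * Im (f t)) (fun t => Cmod d * G t)).
    - apply (is_derive_plus (fun t => Re d * Re (f t)) (fun t => Im d * Im (f t))).
      + apply (is_derive_scal (fun t => Re (f t))); auto.
      + apply (is_derive_scal (fun t => Im (f t))); auto.
    - apply (is_derive_scal G); auto. }
  assert (HG0 : 0 <= G s1 - G s0).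
  { destruct (MVT_gen G s0 s1 G') as [c [Hc Hc']].
    - intros; auto.
    - intros x _. apply continuity_pt_filterlim. apply (ex_derive_continuous G).
      exists (G' x); auto.
    - rewrite Hc'. rewrite Rmin_left in Hc by lra. rewrite Rmax_right in Hc by lra.
      apply Rmult_le_pos; [| lra]. eapply Rle_trans; [apply Cmod_ge_0 | apply Hb; lra]. }
  destruct (MVT_gen h s0 s1 h') as [c [Hc Hc']].
  - intros; auto.
  - intros x _. apply continuity_pt_filterlim. apply (ex_derive_continuous h).
    exists (h' x); auto.
  - rewrite Rmin_left in Hc by lra. rewrite Rmax_right in Hc by lra.
    assert (Hneg : h' c <= 0).
    { unfold h'. rewrite <- Re_conj_mult.
      eapply Rle_trans with (Cmod d * Cmod (f' c) - Cmod d * G' c).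
      - apply Rplus_le_compat_r. eapply Rle_trans; [apply Re_le_Cmod|].
        rewrite Cmod_mult, Cmod_conj. lra.
      - assert (0 <= Cmod d) by apply Cmod_ge_0.
        assert (Cmod (f' c) <= G' c) by (apply Hb; lra). nra. }
    assert (Hd : h s1 - h s0 = Cmod d ^ 2 - Cmod d * (G s1 - G s0)).
    { rewrite Cmod2_alt. unfold h, d. unfold Re, Im; simpl. ring. }
    assert (Cmod d ^ 2 <= Cmod d * (G s1 - G s0)) by nra.
    fold d.
    assert (0 <= Cmod d) by apply Cmod_ge_0.
    destruct (Req_dec (Cmod d) 0) as [E0|E0]; [lra|]. nra.
Qed.

Lemma CD_ext f g t l l' : CD f t l -> (forall s, f s = g s) -> l = l' -> CD g t l'.
Proof.
  intros [H1 H2] E El; subst l'; split.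
  - apply is_derive_ext with (f := fun s => Re (f s)); auto. intro; rewrite E; auto.
  - apply is_derive_ext with (f := fun s => Im (f s)); auto. intro; rewrite E; auto.
Qed.

Lemma Cexp_bound1 (w : C) : Cmod (Cexp w - 1)%C <= exp (Cmod w) - 1.
Proof.
  assert (H := cmvt (fun t => Cexp (w * RtoC t)%C) (fun t => (Cexp (w * RtoC t) * w)%C)
     (fun t => exp (t * Cmod w)) (fun t => Cmod w * exp (t * Cmod w)) 0 1).
  cbv beta in H.
  replace (w * RtoC 1)%C with w in H by ring.
  replace (w * RtoC 0%R)%C with (RtoC 0) in H by ring.
  rewrite Cexp_0 in H. replace (exp (1 * Cmod w)) with (exp (Cmod w)) in H by (f_equal; ring).
  replace (exp (0 * Cmod w)) with 1 in H by (rewrite Rmult_0_l, exp_0; auto).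
  apply H.
  - lra.
  - intro t. apply CD_exp. apply CD_lin.
  - intro t. auto_derive; auto. ring.
  - intros t Ht. rewrite Cmod_mult, Cmod_Cexp. rewrite Rmult_comm.
    apply Rmult_le_compat_l; [apply Cmod_ge_0|].
    apply exp_mono. unfold Re; simpl. rewrite Rmult_0_r, Rminus_0_r.
    assert (fst w <= Cmod w) by apply (Re_le_Cmod w). unfold Re in *. nra.
Qed.

Lemma CD_opp f t l : CD f t l -> CD (fun s => - f s)%C t (- l)%C.
Proof.
  intros [H1 H2]; split.
  - apply is_derive_ext with (f := fun s => - Re (f s)). { intro; unfold Re; simpl; auto. }
    replace (Re (- l)%C) with (- Re l) by (unfold Re; simpl; auto).
    apply (is_derive_opp (fun s => Re (f s))); auto.
  - apply is_derive_ext with (f := fun s => - Im (f s)). { intro; unfold Im; simpl; auto. }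
    replace (Im (- l)%C) with (- Im l) by (unfold Im; simpl; auto).
    apply (is_derive_opp (fun s => Im (f s))); auto.
Qed.

Definition gf (u : C) : C := (Cexp (u + RtoC (1/2) * (u * u)) * (RtoC 1 - u))%C.

Lemma gf_0 : gf (RtoC 0) = RtoC 1.
Proof.
  unfold gf. replace (RtoC 0 + RtoC (1/2) * (RtoC 0 * RtoC 0))%C with (RtoC 0) by ring.
  rewrite Cexp_0. ring.
Qed.

Lemma sqrt_le_exp q : 0 <= q -> sqrt q <= exp ((q - 1) / 2).
Proof.
  intro Hq. rewrite <- (sqrt_pow2 (exp ((q - 1) / 2))) by (apply Rlt_le, exp_pos).
  apply sqrt_le_1_alt. 
  replace (exp ((q - 1) / 2) ^ 2) with (exp (q - 1)).
  - generalize (exp_ineq1_le (q - 1)). lra.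
  - simpl. rewrite Rmult_1_r, <- exp_plus. f_equal. field.
Qed.

Lemma gf_bound u : Cmod (gf u) <= exp (Cmod u ^ 2).
Proof.
  unfold gf. rewrite Cmod_mult, Cmod_Cexp. rewrite Cmod2_alt.
  destruct u as [x y].
  assert (E1 : Cmod (RtoC 1 - (x, y))%C = sqrt ((1-x)^2 + y^2)) by (unfold Cmod; f_equal; simpl; ring).
  assert (E2 : Re ((x,y) + RtoC(1/2)*((x,y)*(x,y)))%C = x + (x^2 - y^2)/2) by (unfold Re; simpl; field).
  rewrite E1, E2. unfold Re, Im; simpl fst; simpl snd.
  assert (H := sqrt_le_exp ((1 - x)^2 + y^2)).
  eapply Rle_trans.
  { apply Rmult_le_compat_l; [apply Rlt_le, exp_pos| apply H; apply Rplus_le_le_0_compat; apply pow2_ge_0]. }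
  rewrite <- exp_plus. apply exp_mono. nra.
Qed.

Lemma gf_deriv (z : C) t :
  CD (fun s => gf (z * RtoC s)%C) t (- (z * z * z) * RtoC (t * t) * Cexp (z * RtoC t + RtoC (1/2) * ((z * RtoC t) * (z * RtoC t))))%C.
Proof.
  eapply CD_ext.
  - apply CD_mult.
    + apply CD_exp. apply CD_plus; [apply CD_lin|].
      apply CD_mult; [apply CD_const|]. apply CD_mult; apply CD_lin.
    + apply CD_plus; [apply CD_const|]. apply CD_opp. apply CD_lin.
  - intro s. unfold gf. reflexivity.
  - cbv beta. set (E := Cexp _).
    assert (Hh : RtoC (1/2) = (/ RtoC 2)%C).
    { apply injective_projections; unfold Cinv; simpl; field. }
    rewrite Hh, RtoC_mult. field.
Qed.

Lemma Cmod_RtoC_nonneg x : 0 <= x -> Cmod (RtoC x) = x.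
Proof. intro; rewrite Cmod_R; apply Rabs_right; lra. Qed.

Lemma gf_diff_ord z a a' m : 0 <= a' -> a' <= a -> a <= m ->
  Cmod (gf (z * RtoC a) - gf (z * RtoC a'))%C <=
  Cmod z ^ 3 * m ^ 2 * exp (Cmod z * m + Cmod z ^ 2 * m ^ 2 / 2) * (a - a').
Proof.
  intros H0 H1 H2.
  set (M := Cmod z ^ 3 * m ^ 2 * exp (Cmod z * m + Cmod z ^ 2 * m ^ 2 / 2)).
  replace (M * (a - a')) with (M * a - M * a') by ring.
  apply (cmvt (fun s => gf (z * RtoC s)%C) (fun t => - (z * z * z) * RtoC (t * t) * Cexp (z * RtoC t + RtoC (1/2) * ((z * RtoC t) * (z * RtoC t))))%C (fun s => M * s) (fun _ => M) a' a H1).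
  - intro t. apply gf_deriv.
  - intro t. auto_derive; auto; ring.
  - intros t Ht. rewrite !Cmod_mult, Cmod_Cexp, Cmod_opp, !Cmod_mult.
    rewrite (Cmod_RtoC_nonneg (t * t)) by nra.
    assert (Hr := Cmod_ge_0 z).
    assert (Hre : Re (z * RtoC t + RtoC (1 / 2) * (z * RtoC t * (z * RtoC t)))%C
                  <= Cmod z * m + Cmod z ^ 2 * m ^ 2 / 2).
    { eapply Rle_trans; [apply Re_le_Cmod|].
      eapply Rle_trans; [apply Cmod_triangle|].
      rewrite !Cmod_mult. rewrite !(Cmod_RtoC_nonneg t) by lra.
      rewrite (Cmod_RtoC_nonneg (1/2)) by lra.
      assert (Cmod z * t <= Cmod z * m) by (apply Rmult_le_compat_l; lra).
      assert (0 <= Cmod z * t) by nra.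
      nra. }
    unfold M. apply exp_mono in Hre.
    assert (t * t <= m ^ 2) by nra.
    assert (0 <= t * t) by nra.
    assert (0 <= Cmod z ^ 3) by (apply pow_le; auto).
    replace (Cmod z * Cmod z * Cmod z) with (Cmod z ^ 3) by ring.
    apply Rmult_le_compat; try nra.
    + apply Rlt_le, exp_pos.
Qed.

Lemma gf_diff z a a' m : 0 <= a -> 0 <= a' -> a <= m -> a' <= m ->
  Cmod (gf (z * RtoC a) - gf (z * RtoC a'))%C <=
  Cmod z ^ 3 * m ^ 2 * exp (Cmod z * m + Cmod z ^ 2 * m ^ 2 / 2) * Rabs (a - a').
Proof.
  intros. destruct (Rle_dec a' a).
  - rewrite Rabs_right by lra. apply gf_diff_ord; auto.
  - rewrite Rabs_left by lra. replace (- (a - a')) with (a' - a) by ring.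
    replace (gf (z * RtoC a) - gf (z * RtoC a'))%C with (- (gf (z * RtoC a') - gf (z * RtoC a)))%C by ring.
    rewrite Cmod_opp. apply gf_diff_ord; auto; lra.
Qed.

Fixpoint cprod (u : nat -> C) (N : nat) : C :=
  match N with O => RtoC 1 | S n => (cprod u n * u n)%C end.
Fixpoint rsum (f : nat -> R) (N : nat) : R :=
  match N with O => 0 | S n => rsum f n + f n end.

Lemma rsum_nonneg f N : (forall i, 0 <= f i) -> 0 <= rsum f N.
Proof. intro H; induction N; simpl; [lra|]. generalize (H N); lra. Qed.

Lemma rsum_le f g N : (forall i, f i <= g i) -> rsum f N <= rsum g N.
Proof. intro H; induction N; simpl; [lra|]. generalize (H N); lra. Qed.

Lemma rsum_plus f g N : rsum (fun i => f i + g i) N = rsum f N + rsum g N.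
Proof. induction N; simpl; [ring|]. rewrite IHN; ring. Qed.

Lemma rsum_scal c f N : rsum (fun i => c * f i) N = c * rsum f N.
Proof. induction N; simpl; [ring|]. rewrite IHN; ring. Qed.

Lemma cprod_bound u s N : (forall i, Cmod (u i) <= exp (s i)) ->
  Cmod (cprod u N) <= exp (rsum s N).
Proof.
  intro H; induction N; simpl.
  - rewrite Cmod_1, exp_0; lra.
  - rewrite Cmod_mult, exp_plus. apply Rmult_le_compat; auto using Cmod_ge_0.
Qed.

Lemma cprod_diff u v s s' N :
  (forall i, 0 <= s i) -> (forall i, 0 <= s' i) ->
  (forall i, Cmod (u i) <= exp (s i)) -> (forall i, Cmod (v i) <= exp (s' i)) ->
  Cmod (cprod u N - cprod v N)%C <=
  exp (rsum s N + rsum s' N) * rsum (fun i => Cmod (u i - v i)%C) N.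
Proof.
  intros Hs Hs' Hu Hv; induction N; simpl.
  - replace (RtoC 1 - RtoC 1)%C with (RtoC 0) by ring. rewrite Cmod_0. lra.
  - replace (cprod u N * u N - cprod v N * v N)%C with
      ((cprod u N - cprod v N) * u N + cprod v N * (u N - v N))%C by ring.
    eapply Rle_trans; [apply Cmod_triangle|]. rewrite !Cmod_mult.
    assert (H1 := Hu N). assert (H2 := cprod_bound v s' N Hv).
    assert (HS := rsum_nonneg s N Hs). assert (HS' := rsum_nonneg s' N Hs').
    assert (Hsn := Hs N). assert (Hsn' := Hs' N).
    assert (HD := rsum_nonneg (fun i => Cmod (u i - v i)%C) N (fun i => Cmod_ge_0 _)).
    assert (Hc := Cmod_ge_0 (u N - v N)%C).
    assert (E1 : exp (rsum s N + rsum s' N) * exp (s N) <= exp (rsum s N + s N + (rsum s' N + s' N)))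
      by (rewrite <- exp_plus; apply exp_mono; lra).
    assert (E2 : exp (rsum s' N) <= exp (rsum s N + s N + (rsum s' N + s' N)))
      by (apply exp_mono; lra).
    assert (0 <= Cmod (cprod u N - cprod v N)%C) by apply Cmod_ge_0.
    assert (0 <= Cmod (u N)) by apply Cmod_ge_0.
    assert (0 <= exp (rsum s N + rsum s' N)) by (apply Rlt_le, exp_pos).
    assert (Cmod (cprod u N - cprod v N)%C * Cmod (u N) <=
            exp (rsum s N + rsum s' N) * rsum (fun i => Cmod (u i - v i)%C) N * exp (s N))
      by (apply Rmult_le_compat; auto).
    assert (Cmod (cprod v N) * Cmod (u N - v N)%C <= exp (rsum s' N) * Cmod (u N - v N)%C)
      by (apply Rmult_le_compat_r; auto).
    nra.
Qed.

Definition Gfac (a b : R) (z : C) : C := (gf (z * RtoC a) * gf ((- z) * RtoC b))%C.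
Definition Pt (w : omega) (z : C) (N : nat) : C := cprod (fun i => Gfac (ap w i) (am w i) z) N.
Definition sq (w : omega) (i : nat) : R := ap w i ^ 2 + am w i ^ 2.

Lemma Efactor_Gfac a b z :
  Efactor a b z = (Cexp (- (RtoC ((a ^ 2 + b ^ 2) / 2) * (z * z))) * Gfac a b z)%C.
Proof.
  unfold Efactor, Gfac, gf.
  set (P := (- (RtoC ((a ^ 2 + b ^ 2) / 2) * (z * z)))%C).
  set (Q1 := (z * RtoC a + RtoC (1 / 2) * (z * RtoC a * (z * RtoC a)))%C).
  set (Q2 := (- z * RtoC b + RtoC (1 / 2) * (- z * RtoC b * (- z * RtoC b)))%C).
  transitivity (Cexp (P + Q1 + Q2) * ((RtoC 1 - z * RtoC a) * (RtoC 1 - - z * RtoC b)))%C.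
  - replace (P + Q1 + Q2)%C with (z * RtoC a + - (z * RtoC b))%C.
    + rewrite Cexp_add. ring.
    + unfold P, Q1, Q2. destruct z as [x y].
      apply injective_projections; simpl; field.
  - rewrite !Cexp_add. ring.
Qed.

Lemma Eprod_Pt w z N :
  Eprod w z N = (Cexp (- (RtoC (rsum (sq w) N / 2) * (z * z))) * Pt w z N)%C.
Proof.
  induction N; cbn [Eprod rsum].
  - replace (- (RtoC (0 / 2) * (z * z)))%C with (RtoC 0).
    + rewrite Cexp_0. unfold Pt; simpl. ring.
    + apply injective_projections; simpl; field.
  - rewrite IHN, Efactor_Gfac. unfold Pt; cbn [cprod]. fold (Pt w z N).
    replace (- (RtoC ((rsum (sq w) N + sq w N) / 2) * (z * z)))%C with
      ((- (RtoC (rsum (sq w) N / 2) * (z * z))) + (- (RtoC ((ap w N ^ 2 + am w N ^ 2) / 2) * (z * z))))%C.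
    + rewrite Cexp_add. ring.
    + unfold sq. apply injective_projections; simpl; field.
Qed.

Lemma Cmod_zr (z : C) a : Cmod (z * RtoC a)%C = Cmod z * Rabs a.
Proof. rewrite Cmod_mult, Cmod_R; auto. Qed.

Lemma gf_zbound z a : Cmod (gf (z * RtoC a)) <= exp (Cmod z ^ 2 * a ^ 2).
Proof.
  eapply Rle_trans; [apply gf_bound|]. rewrite Cmod_zr.
  apply exp_mono. rewrite Rpow_mult_distr, pow2_abs. lra.
Qed.

Lemma Gfac_bound a b z : Cmod (Gfac a b z) <= exp (Cmod z ^ 2 * (a ^ 2 + b ^ 2)).
Proof.
  unfold Gfac. rewrite Cmod_mult.
  replace (Cmod z ^ 2 * (a ^ 2 + b ^ 2)) with (Cmod z ^ 2 * a ^ 2 + Cmod (- z)%C ^ 2 * b ^ 2)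
    by (rewrite Cmod_opp; ring).
  rewrite exp_plus. apply Rmult_le_compat; auto using Cmod_ge_0, gf_zbound.
Qed.

Lemma gf_diff2 z a a' m : 0 <= a -> 0 <= a' -> a <= m -> a' <= m ->
  Cmod (gf (z * RtoC a) - gf (z * RtoC a'))%C <=
  Cmod z ^ 3 * exp (Cmod z * m + Cmod z ^ 2 * m ^ 2 / 2) * ((a ^ 2 + a' ^ 2) * Rabs (a - a')).
Proof.
  intros. set (M0 := Rmax a a').
  assert (HM0 : a <= M0 /\ a' <= M0 /\ M0 <= m /\ M0 ^ 2 <= a ^ 2 + a' ^ 2).
  { unfold M0, Rmax. destruct (Rle_dec a a'); repeat split; nra. }
  eapply Rle_trans; [apply (gf_diff z a a' M0); tauto|].
  assert (Hr := Cmod_ge_0 z).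
  assert (0 <= Cmod z ^ 3) by (apply pow_le; auto).
  assert (0 <= Rabs (a - a')) by apply Rabs_pos.
  assert (exp (Cmod z * M0 + Cmod z ^ 2 * M0 ^ 2 / 2) <= exp (Cmod z * m + Cmod z ^ 2 * m ^ 2 / 2)).
  { apply exp_mono. assert (Cmod z * M0 <= Cmod z * m) by (apply Rmult_le_compat_l; lra).
    assert (M0 ^ 2 <= m ^ 2) by (apply pow_incr; lra).
    assert (0 <= Cmod z ^ 2) by (apply pow_le; auto). nra. }
  assert (0 < exp (Cmod z * M0 + Cmod z ^ 2 * M0 ^ 2 / 2)) by apply exp_pos.
  assert (0 <= M0 ^ 2) by apply pow2_ge_0.
  replace (Cmod z ^ 3 * M0 ^ 2 * exp (Cmod z * M0 + Cmod z ^ 2 * M0 ^ 2 / 2) * Rabs (a - a'))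
    with ((Cmod z ^ 3 * Rabs (a - a')) * (exp (Cmod z * M0 + Cmod z ^ 2 * M0 ^ 2 / 2) * M0 ^ 2)) by ring.
  replace (Cmod z ^ 3 * exp (Cmod z * m + Cmod z ^ 2 * m ^ 2 / 2) * ((a ^ 2 + a' ^ 2) * Rabs (a - a')))
    with ((Cmod z ^ 3 * Rabs (a - a')) * (exp (Cmod z * m + Cmod z ^ 2 * m ^ 2 / 2) * (a ^ 2 + a' ^ 2))) by ring.
  apply Rmult_le_compat_l; [nra|]. apply Rmult_le_compat; lra.
Qed.

Lemma Gfac_diff a b a' b' z m :
  0 <= a -> 0 <= a' -> a <= m -> a' <= m ->
  0 <= b -> 0 <= b' -> b <= m -> b' <= m ->
  Cmod (Gfac a b z - Gfac a' b' z)%C <=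
  Cmod z ^ 3 * exp (Cmod z * m + Cmod z ^ 2 * m ^ 2 / 2) * exp (Cmod z ^ 2 * m ^ 2) *
  ((a ^ 2 + a' ^ 2) * Rabs (a - a') + (b ^ 2 + b' ^ 2) * Rabs (b - b')).
Proof.
  intros. unfold Gfac.
  set (K := Cmod z ^ 3 * exp (Cmod z * m + Cmod z ^ 2 * m ^ 2 / 2)).
  replace (gf (z * RtoC a) * gf (- z * RtoC b) - gf (z * RtoC a') * gf (- z * RtoC b'))%C
    with ((gf (z * RtoC a) - gf (z * RtoC a')) * gf (- z * RtoC b) +
          gf (z * RtoC a') * (gf (- z * RtoC b) - gf (- z * RtoC b')))%C by ring.
  eapply Rle_trans; [apply Cmod_triangle|]. rewrite !Cmod_mult.
  assert (G1 := gf_diff2 z a a' m). assert (G2 := gf_diff2 (- z)%C b b' m).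
  rewrite Cmod_opp in G2. fold K in G1, G2.
  assert (Hb : Cmod (gf (- z * RtoC b)%C) <= exp (Cmod z ^ 2 * m ^ 2)).
  { eapply Rle_trans; [apply gf_zbound|]. rewrite Cmod_opp. apply exp_mono.
    assert (0 <= Cmod z ^ 2) by (apply pow_le, Cmod_ge_0).
    assert (b ^ 2 <= m ^ 2) by (apply pow_incr; lra). nra. }
  assert (Ha : Cmod (gf (z * RtoC a')%C) <= exp (Cmod z ^ 2 * m ^ 2)).
  { eapply Rle_trans; [apply gf_zbound|]. apply exp_mono.
    assert (0 <= Cmod z ^ 2) by (apply pow_le, Cmod_ge_0).
    assert (a' ^ 2 <= m ^ 2) by (apply pow_incr; lra). nra. }
  assert (X1 : Cmod (gf (z * RtoC a) - gf (z * RtoC a'))%C * Cmod (gf (- z * RtoC b)%C)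
     <= K * ((a ^ 2 + a' ^ 2) * Rabs (a - a')) * exp (Cmod z ^ 2 * m ^ 2)).
  { apply Rmult_le_compat; auto using Cmod_ge_0. }
  assert (X2 : Cmod (gf (z * RtoC a')%C) * Cmod (gf (- z * RtoC b) - gf (- z * RtoC b'))%C
     <= exp (Cmod z ^ 2 * m ^ 2) * (K * ((b ^ 2 + b' ^ 2) * Rabs (b - b')))).
  { apply Rmult_le_compat; auto using Cmod_ge_0. }
  lra.
Qed.

Definition is_Clim (u : nat -> C) (l : C) : Prop :=
  is_lim_seq (fun n => Re (u n)) (Re l) /\ is_lim_seq (fun n => Im (u n)) (Im l).

Lemma Clim_seq_correct u l : is_Clim u l -> Clim_seq u = l.
Proof.
  intros [H1 H2]. unfold Clim_seq.
  rewrite (is_lim_seq_unique _ _ H1), (is_lim_seq_unique _ _ H2). simpl.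
  destruct l; reflexivity.
Qed.

Lemma is_Clim_ext u v l : (forall n, u n = v n) -> is_Clim u l -> is_Clim v l.
Proof.
  intros E [H1 H2]; split.
  - apply is_lim_seq_ext with (u := fun n => Re (u n)); auto. intro; rewrite E; auto.
  - apply is_lim_seq_ext with (u := fun n => Im (u n)); auto. intro; rewrite E; auto.
Qed.

Lemma is_Clim_const c : is_Clim (fun _ => c) c.
Proof. split; apply is_lim_seq_const. Qed.

Lemma is_Clim_mult u v l1 l2 : is_Clim u l1 -> is_Clim v l2 ->
  is_Clim (fun n => u n * v n)%C (l1 * l2)%C.
Proof.
  intros [H1 H2] [H3 H4]; split.
  - apply is_lim_seq_ext with (u := fun n => Re (u n) * Re (v n) - Im (u n) * Im (v n)).
    { intro; unfold Re, Im; simpl; ring. }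
    replace (Re (l1 * l2)%C) with (Re l1 * Re l2 - Im l1 * Im l2) by (unfold Re, Im; simpl; ring).
    apply is_lim_seq_minus'; apply is_lim_seq_mult'; auto.
  - apply is_lim_seq_ext with (u := fun n => Re (u n) * Im (v n) + Im (u n) * Re (v n)).
    { intro; unfold Re, Im; simpl; ring. }
    replace (Im (l1 * l2)%C) with (Re l1 * Im l2 + Im l1 * Re l2) by (unfold Re, Im; simpl; ring).
    apply is_lim_seq_plus'; apply is_lim_seq_mult'; auto.
Qed.

Lemma is_Clim_minus u v l1 l2 : is_Clim u l1 -> is_Clim v l2 ->
  is_Clim (fun n => u n - v n)%C (l1 - l2)%C.
Proof.
  intros [H1 H2] [H3 H4]; split.
  - apply is_lim_seq_ext with (u := fun n => Re (u n) - Re (v n)).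
    { intro; unfold Re, Im; simpl; ring. }
    replace (Re (l1 - l2)%C) with (Re l1 - Re l2) by (unfold Re, Im; simpl; ring).
    apply is_lim_seq_minus'; auto.
  - apply is_lim_seq_ext with (u := fun n => Im (u n) - Im (v n)).
    { intro; unfold Re, Im; simpl; ring. }
    replace (Im (l1 - l2)%C) with (Im l1 - Im l2) by (unfold Re, Im; simpl; ring).
    apply is_lim_seq_minus'; auto.
Qed.

Lemma cont_pt_of_derive f x : ex_derive f x -> continuity_pt f x.
Proof. intro H. apply continuity_pt_filterlim. apply (ex_derive_continuous f). auto. Qed.

Lemma is_Clim_Cexp u l : is_Clim u l -> is_Clim (fun n => Cexp (u n)) (Cexp l).
Proof.
  intros [H1 H2].
  assert (E1 : is_lim_seq (fun n => exp (Re (u n))) (exp (Re l))).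
  { apply (is_lim_seq_continuous exp); auto. apply cont_pt_of_derive. auto_derive; auto. }
  assert (E2 : is_lim_seq (fun n => cos (Im (u n))) (cos (Im l))).
  { apply (is_lim_seq_continuous cos); auto. apply cont_pt_of_derive. auto_derive; auto. }
  assert (E3 : is_lim_seq (fun n => sin (Im (u n))) (sin (Im l))).
  { apply (is_lim_seq_continuous sin); auto. apply cont_pt_of_derive. auto_derive; auto. }
  split; unfold Cexp; simpl.
  - apply (is_lim_seq_mult' _ _ _ _ E1 E2).
  - apply (is_lim_seq_mult' _ _ _ _ E1 E3).
Qed.

Lemma is_Clim_le u l B : is_Clim u l -> (forall n, Cmod (u n) <= B) -> Cmod l <= B.
Proof.
  intros [H1 H2] HB.
  assert (HB0 : 0 <= B) by (eapply Rle_trans; [apply Cmod_ge_0 | apply (HB O)]).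
  assert (H : is_lim_seq (fun n => Re (u n) ^ 2 + Im (u n) ^ 2) (Re l ^ 2 + Im l ^ 2)).
  { apply is_lim_seq_plus'; simpl;
    [apply is_lim_seq_mult'; [auto| apply is_lim_seq_mult'; [auto | apply is_lim_seq_const]] |
     apply is_lim_seq_mult'; [auto| apply is_lim_seq_mult'; [auto | apply is_lim_seq_const]]]. }
  assert (Hle : Rbar_le (Re l ^ 2 + Im l ^ 2) (B ^ 2)).
  { refine (is_lim_seq_le _ _ _ _ _ H (is_lim_seq_const _)).
    intro n. cbv beta. rewrite <- Cmod2_alt. apply pow_incr. split; auto using Cmod_ge_0. }
  change (Re l ^ 2 + Im l ^ 2 <= B ^ 2) in Hle. rewrite <- Cmod2_alt in Hle.
  assert (0 <= Cmod l) by apply Cmod_ge_0. nra.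
Qed.

Lemma im_le_Cmod (c : C) : Rabs (Im c) <= Cmod c.
Proof.
  destruct c as [x y]. unfold Cmod, Im; simpl.
  rewrite <- sqrt_Rsqr_abs. apply sqrt_le_1_alt. unfold Rsqr. nra.
Qed.

Lemma rsum_sum_n f N : rsum f (S N) = sum_n f N.
Proof.
  induction N.
  - simpl. rewrite sum_O. ring.
  - rewrite sum_Sn. change (rsum f (S N) + f (S N) = sum_n f N + f (S N)). rewrite IHN; auto.
Qed.

Lemma cauchy_real (u c : nat -> R) :
  (forall n, Rabs (u (S n) - u n) <= c n) -> ex_series c -> exists l : R, is_lim_seq u l.
Proof.
  intros H Hc.
  assert (Hd : ex_series (fun n => u (S n) - u n)).
  { apply (@ex_series_le R_AbsRing R_CompleteNormedModule _ c); auto. }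
  destruct Hd as [L HL].
  exists (L + u O).
  apply is_lim_seq_incr_1.
  assert (HL' : is_lim_seq (sum_n (fun n => u (S n) - u n)) L) by apply HL.
  apply is_lim_seq_ext with (u := fun n => sum_n (fun n => u (S n) - u n) n + u O).
  - intro n. rewrite <- rsum_sum_n.
    assert (forall N, rsum (fun n => u (S n) - u n) N = u N - u O).
    { induction N; simpl; [ring|]. rewrite IHN; ring. }
    rewrite H0. ring.
  - apply is_lim_seq_plus'; auto. apply is_lim_seq_const.
Qed.

Lemma is_Clim_cauchy (u : nat -> C) c :
  (forall n, Cmod (u (S n) - u n)%C <= c n) -> ex_series c -> exists l, is_Clim u l.
Proof.
  intros H Hc.
  destruct (cauchy_real (fun n => Re (u n)) c) as [l1 H1]; auto.
  { intro n. eapply Rle_trans; [|apply H]. eapply Rle_trans; [|apply re_le_Cmod].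
    apply Req_le; f_equal; unfold Re; simpl; ring. }
  destruct (cauchy_real (fun n => Im (u n)) c) as [l2 H2]; auto.
  { intro n. eapply Rle_trans; [|apply H]. eapply Rle_trans; [|apply im_le_Cmod].
    apply Req_le; f_equal; unfold Im; simpl; ring. }
  exists (l1, l2). split; auto.
Qed.

Lemma rsum_sq_le w N : in_Omega_hat w -> rsum (sq w) N <= dl w.
Proof.
  intros (H1 & H2 & H3 & H4). destruct N; simpl.
  - lra.
  - assert (H := H4 N). change (sum_n (sq w) N <= dl w) in H. rewrite <- rsum_sum_n in H. exact H.
Qed.

Lemma sq_nonneg w i : 0 <= sq w i.
Proof. unfold sq. generalize (pow2_ge_0 (ap w i)) (pow2_ge_0 (am w i)). lra. Qed.

Lemma rsum_incr f N : (forall i, 0 <= f i) -> rsum f N <= rsum f (S N).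
Proof. intro H; simpl. generalize (H N); lra. Qed.

Lemma ex_series_bounded f M : (forall i, 0 <= f i) -> (forall N, rsum f N <= M) -> ex_series f.
Proof.
  intros H HM.
  destruct (ex_finite_lim_seq_incr (sum_n f) M) as [l Hl].
  - intro n. rewrite <- !rsum_sum_n. apply rsum_incr; auto.
  - intro n. rewrite <- rsum_sum_n. auto.
  - exists l. apply Hl.
Qed.

Lemma is_lim_rsum f : ex_series f -> is_lim_seq (rsum f) (Series f).
Proof.
  intro H. apply is_lim_seq_incr_1.
  apply is_lim_seq_ext with (u := sum_n f).
  - intro; rewrite rsum_sum_n; auto.
  - apply (Series_correct f H).
Qed.

Lemma term_le_Series f i : (forall i, 0 <= f i) -> ex_series f -> f i <= Series f.
Proof.
  intros H Hf.
  assert (Hl := is_lim_rsum f Hf).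
  assert (rsum f (S i) <= Series f).
  { apply (is_lim_seq_incr_compare (rsum f)); auto. intro; apply rsum_incr; auto. }
  simpl in H0. generalize (rsum_nonneg f i H). lra.
Qed.

Lemma omega_series w : in_Omega_hat w ->
  ex_series (sq w) /\
  is_lim_seq (rsum (sq w)) (Series (fun i => ap w i ^ 2) + Series (fun i => am w i ^ 2)).
Proof.
  intro Hw.
  assert (Ha : ex_series (fun i => ap w i ^ 2)).
  { apply ex_series_bounded with (dl w). intro; apply pow2_ge_0.
    intro N. eapply Rle_trans; [|apply (rsum_sq_le w N Hw)]. apply rsum_le.
    intro i; unfold sq. generalize (pow2_ge_0 (am w i)); lra. }
  assert (Hb : ex_series (fun i => am w i ^ 2)).
  { apply ex_series_bounded with (dl w). intro; apply pow2_ge_0.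
    intro N. eapply Rle_trans; [|apply (rsum_sq_le w N Hw)]. apply rsum_le.
    intro i; unfold sq. generalize (pow2_ge_0 (ap w i)); lra. }
  assert (Hs : ex_series (sq w)) by (apply (ex_series_plus _ _ Ha Hb)).
  split; auto.
  rewrite <- Series_plus; auto. apply is_lim_rsum; auto.
Qed.

Lemma omega_bounds w i : in_Omega_hat w ->
  0 <= ap w i <= sqrt (dl w) /\ 0 <= am w i <= sqrt (dl w).
Proof.
  intro Hw. assert (H := rsum_sq_le w (S i) Hw). cbn [rsum] in H.
  assert (H0 := rsum_nonneg (sq w) i (sq_nonneg w)). unfold sq in H, H0.
  destruct Hw as ((Ha & _) & (Hb & _) & _).
  assert (ap w i ^ 2 <= dl w) by (generalize (pow2_ge_0 (am w i)); lra).
  assert (am w i ^ 2 <= dl w) by (generalize (pow2_ge_0 (ap w i)); lra).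
  split; split; auto.
  - rewrite <- (sqrt_pow2 (ap w i)) by auto. apply sqrt_le_1_alt; auto.
  - rewrite <- (sqrt_pow2 (am w i)) by auto. apply sqrt_le_1_alt; auto.
Qed.

Lemma Gfac_00 z : Gfac 0 0 z = RtoC 1.
Proof.
  unfold Gfac. replace (z * RtoC 0)%C with (RtoC 0) by ring.
  replace (- z * RtoC 0)%C with (RtoC 0) by ring. rewrite gf_0. ring.
Qed.

Lemma Pt_bound w z N : in_Omega_hat w -> Cmod (Pt w z N) <= exp (Cmod z ^ 2 * dl w).
Proof.
  intro Hw. unfold Pt.
  eapply Rle_trans; [apply (cprod_bound _ (fun i => Cmod z ^ 2 * sq w i))|].
  - intro i. apply Gfac_bound.
  - apply exp_mono. rewrite rsum_scal. apply Rmult_le_compat_l.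
    + apply pow2_ge_0.
    + apply rsum_sq_le; auto.
Qed.

Lemma Pt_conv w z : in_Omega_hat w -> exists P, is_Clim (Pt w z) P.
Proof.
  intro Hw.
  set (m := sqrt (dl w)).
  set (K := Cmod z ^ 3 * exp (Cmod z * m + Cmod z ^ 2 * m ^ 2 / 2) * exp (Cmod z ^ 2 * m ^ 2)).
  apply (is_Clim_cauchy _ (fun n => exp (Cmod z ^ 2 * dl w) * (K * (m * sq w n)))).
  - intro n. unfold Pt; cbn [cprod]. fold (Pt w z n).
    replace (Pt w z n * Gfac (ap w n) (am w n) z - Pt w z n)%C
      with (Pt w z n * (Gfac (ap w n) (am w n) z - Gfac 0 0 z))%C by (rewrite Gfac_00; ring).
    rewrite Cmod_mult.
    destruct (omega_bounds w n Hw) as [[Ha1 Ha2] [Hb1 Hb2]]. fold m in Ha2, Hb2.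
    assert (Hm : 0 <= m) by apply sqrt_pos.
    apply Rmult_le_compat; auto using Cmod_ge_0, Pt_bound.
    eapply Rle_trans; [apply (Gfac_diff _ _ _ _ z m); lra|]. fold K.
    assert (0 <= K).
    { unfold K. assert (0 <= Cmod z ^ 3) by (apply pow_le, Cmod_ge_0).
      generalize (exp_pos (Cmod z * m + Cmod z ^ 2 * m ^ 2 / 2)) (exp_pos (Cmod z ^ 2 * m ^ 2)).
      intros. apply Rmult_le_pos; [apply Rmult_le_pos|]; lra. }
    apply Rmult_le_compat_l; auto.
    rewrite !Rminus_0_r, !Rabs_right by lra. unfold sq. nra.
  - apply (@ex_series_scal R_AbsRing R_NormedModule).
    apply (@ex_series_scal R_AbsRing R_NormedModule).
    apply (@ex_series_scal R_AbsRing R_NormedModule).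
    apply (omega_series w Hw).
Qed.

Lemma is_Clim_rscal x (L : R) c : is_lim_seq x L -> is_Clim (fun n => RtoC (x n) * c)%C (RtoC L * c)%C.
Proof.
  intro H; split.
  - apply is_lim_seq_ext with (u := fun n => x n * Re c). { intro; unfold Re; simpl; ring. }
    replace (Re (RtoC L * c)%C) with (L * Re c) by (unfold Re; simpl; ring).
    apply is_lim_seq_mult'; auto. apply is_lim_seq_const.
  - apply is_lim_seq_ext with (u := fun n => x n * Im c). { intro; unfold Im; simpl; ring. }
    replace (Im (RtoC L * c)%C) with (L * Im c) by (unfold Im; simpl; ring).
    apply is_lim_seq_mult'; auto. apply is_lim_seq_const.
Qed.

Definition Aw (w : omega) (z : C) : C :=
  (- (RtoC (g1 w) * z) - RtoC (dl w / 2) * (z * z))%C.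

Lemma E_repr w z P : in_Omega_hat w -> is_Clim (Pt w z) P ->
  E w z = (Cexp (Aw w z) * P)%C.
Proof.
  intros Hw HP.
  destruct (omega_series w Hw) as [_ HS].
  set (S := Series (fun i => ap w i ^ 2) + Series (fun i => am w i ^ 2)) in *.
  assert (HE : is_Clim (Eprod w z) (Cexp (RtoC (- (S / 2)) * (z * z)) * P)%C).
  { apply is_Clim_ext with (u := fun N => (Cexp (RtoC (- (rsum (sq w) N / 2)) * (z * z)) * Pt w z N)%C).
    - intro N. rewrite Eprod_Pt. f_equal. f_equal.
      apply injective_projections; simpl; ring.
    - apply is_Clim_mult; auto. apply is_Clim_Cexp. apply is_Clim_rscal.
      apply is_lim_seq_ext with (u := fun N => (- / 2) * rsum (sq w) N).
      { intro; field. }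
      replace (- (S / 2)) with ((- / 2) * S) by field.
      apply (is_lim_seq_scal_l _ _ S HS). }
  unfold E. rewrite (Clim_seq_correct _ _ HE).
  rewrite Cmult_assoc, <- Cexp_add. f_equal. f_equal.
  unfold Aw, g2.
  replace (dl w - Series (fun i => ap w i ^ 2) - Series (fun i => am w i ^ 2)) with (dl w - S)
    by (unfold S; ring).
  clearbody S. apply injective_projections; simpl; field.
Qed.

Lemma cbrt_ge x S : 0 <= x -> x ^ 3 <= S -> x <= cbrt S.
Proof.
  intros Hx HS. unfold cbrt. destruct (Rle_dec S 0).
  - destruct (Req_dec x 0); [lra|]. assert (0 < x ^ 3) by (apply pow_lt; lra). lra.
  - destruct (Req_dec x 0) as [E0|E0].
    + subst. unfold Rpower. apply Rlt_le, exp_pos.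
    + assert (Hx' : 0 < x) by lra.
      replace x with (Rpower (x ^ 3) (1/3)) at 1.
      * apply Rle_Rpower_l; [lra|]. split; auto. apply pow_lt; auto.
      * rewrite <- (Rpower_pow 3 x Hx'), Rpower_mult.
        replace (INR 3 * (1/3)) with 1 by (simpl; field). apply Rpower_1; auto.
Qed.

Definition c3 (w w' : omega) (i : nat) : R :=
  Rabs (ap w i - ap w' i) ^ 3 + Rabs (am w i - am w' i) ^ 3.

Lemma diff3_le a a' m : 0 <= a <= m -> 0 <= a' <= m ->
  Rabs (a - a') ^ 3 <= m * (a ^ 2 + a' ^ 2).
Proof.
  intros Ha Ha'. assert (Habs : Rabs (a - a') <= m).
  { apply Rabs_le; lra. }
  assert (Hsq : Rabs (a - a') ^ 2 <= a ^ 2 + a' ^ 2).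
  { rewrite <- Rsqr_pow2, <- Rsqr_abs, Rsqr_pow2. nra. }
  assert (H0 := Rabs_pos (a - a')).
  replace (Rabs (a - a') ^ 3) with (Rabs (a - a') * Rabs (a - a') ^ 2) by ring.
  apply Rmult_le_compat; auto. apply pow2_ge_0.
Qed.

Lemma delta_le_T w w' i : in_Omega_hat w -> in_Omega_hat w' ->
  Rabs (ap w i - ap w' i) <= cbrt (Series (c3 w w')) /\
  Rabs (am w i - am w' i) <= cbrt (Series (c3 w w')).
Proof.
  intros Hw Hw'.
  set (mu := sqrt (dl w) + sqrt (dl w')).
  assert (Hc3 : forall i, 0 <= c3 w w' i).
  { intro j; unfold c3. generalize (pow_le _ 3 (Rabs_pos (ap w j - ap w' j)))
     (pow_le _ 3 (Rabs_pos (am w j - am w' j))). lra. }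
  assert (Hex : ex_series (c3 w w')).
  { apply (@ex_series_le R_AbsRing R_CompleteNormedModule _ (fun i => mu * (sq w i + sq w' i))).
    - intro j. change (Rabs (c3 w w' j) <= mu * (sq w j + sq w' j)).
      rewrite Rabs_right by (apply Rle_ge; auto).
      destruct (omega_bounds w j Hw) as [Ha Hb]. destruct (omega_bounds w' j Hw') as [Ha' Hb'].
      assert (0 <= sqrt (dl w)) by apply sqrt_pos. assert (0 <= sqrt (dl w')) by apply sqrt_pos.
      assert (H1 := diff3_le (ap w j) (ap w' j) mu ltac:(unfold mu; lra) ltac:(unfold mu; lra)).
      assert (H2 := diff3_le (am w j) (am w' j) mu ltac:(unfold mu; lra) ltac:(unfold mu; lra)).
      unfold c3, sq. lra.
    - apply (@ex_series_scal R_AbsRing R_NormedModule).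
      apply (@ex_series_plus R_AbsRing R_NormedModule).
      + apply (omega_series w Hw).
      + apply (omega_series w' Hw'). }
  assert (Ht := term_le_Series (c3 w w') i Hc3 Hex).
  assert (E3 : c3 w w' i = Rabs (ap w i - ap w' i) ^ 3 + Rabs (am w i - am w' i) ^ 3) by reflexivity.
  rewrite E3 in Ht.
  generalize (pow_le _ 3 (Rabs_pos (ap w i - ap w' i)))
     (pow_le _ 3 (Rabs_pos (am w i - am w' i))). intros.
  split; apply cbrt_ge; auto using Rabs_pos; lra.
Qed.

Lemma Pt_diff w w' z N : in_Omega_hat w -> in_Omega_hat w' ->
  let mu := sqrt (dl w) + sqrt (dl w') in
  let r := Cmod z in
  Cmod (Pt w z N - Pt w' z N)%C <=
  exp (r ^ 2 * dl w + r ^ 2 * dl w') *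
  (r ^ 3 * exp (r * mu + r ^ 2 * mu ^ 2 / 2) * exp (r ^ 2 * mu ^ 2) *
   cbrt (Series (c3 w w')) * (dl w + dl w')).
Proof.
  intros Hw Hw' mu r.
  set (K := r ^ 3 * exp (r * mu + r ^ 2 * mu ^ 2 / 2) * exp (r ^ 2 * mu ^ 2)).
  set (T := cbrt (Series (c3 w w'))).
  assert (Hr : 0 <= r) by apply Cmod_ge_0.
  assert (HK : 0 <= K).
  { unfold K. assert (0 <= r ^ 3) by (apply pow_le; auto).
    generalize (exp_pos (r * mu + r ^ 2 * mu ^ 2 / 2)) (exp_pos (r ^ 2 * mu ^ 2)).
    intros. apply Rmult_le_pos; [apply Rmult_le_pos|]; lra. }
  assert (HT : 0 <= T).
  { eapply Rle_trans; [apply Rabs_pos|]. apply (delta_le_T w w' O Hw Hw'). }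
  unfold Pt.
  eapply Rle_trans.
  { apply (cprod_diff _ _ (fun i => r ^ 2 * sq w i) (fun i => r ^ 2 * sq w' i)).
    - intro; apply Rmult_le_pos; [apply pow2_ge_0 | apply sq_nonneg].
    - intro; apply Rmult_le_pos; [apply pow2_ge_0 | apply sq_nonneg].
    - intro; apply Gfac_bound.
    - intro; apply Gfac_bound. }
  rewrite !rsum_scal.
  assert (H1 := rsum_sq_le w N Hw). assert (H2 := rsum_sq_le w' N Hw').
  assert (Hr2 : 0 <= r ^ 2) by apply pow2_ge_0.
  apply Rmult_le_compat.
  - apply Rlt_le, exp_pos.
  - apply rsum_nonneg. intro; apply Cmod_ge_0.
  - apply exp_mono. nra.
  - eapply Rle_trans.
    { apply (rsum_le _ (fun i => K * T * (sq w i + sq w' i))).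
      intro i.
      destruct (omega_bounds w i Hw) as [Ha Hb]. destruct (omega_bounds w' i Hw') as [Ha' Hb'].
      assert (0 <= sqrt (dl w)) by apply sqrt_pos. assert (0 <= sqrt (dl w')) by apply sqrt_pos.
      eapply Rle_trans; [apply (Gfac_diff _ _ _ _ z mu); unfold mu; lra|].
      fold r. fold K.
      destruct (delta_le_T w w' i Hw Hw') as [D1 D2]. fold T in D1, D2.
      unfold sq.
      assert (0 <= ap w i ^ 2 + ap w' i ^ 2) by (generalize (pow2_ge_0 (ap w i)) (pow2_ge_0 (ap w' i)); lra).
      assert (0 <= am w i ^ 2 + am w' i ^ 2) by (generalize (pow2_ge_0 (am w i)) (pow2_ge_0 (am w' i)); lra).
      assert ((ap w i ^ 2 + ap w' i ^ 2) * Rabs (ap w i - ap w' i) <= (ap w i ^ 2 + ap w' i ^ 2) * T)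
        by (apply Rmult_le_compat_l; auto).
      assert ((am w i ^ 2 + am w' i ^ 2) * Rabs (am w i - am w' i) <= (am w i ^ 2 + am w' i ^ 2) * T)
        by (apply Rmult_le_compat_l; auto).
      replace (K * T * (ap w i ^ 2 + am w i ^ 2 + (ap w' i ^ 2 + am w' i ^ 2)))
        with (K * ((ap w i ^ 2 + ap w' i ^ 2) * T + (am w i ^ 2 + am w' i ^ 2) * T)) by ring.
      apply Rmult_le_compat_l; auto. lra. }
    rewrite rsum_scal, rsum_plus.
    replace (K * cbrt (Series (c3 w w')) * (dl w + dl w')) with (K * T * (dl w + dl w')) by reflexivity.
    apply Rmult_le_compat_l; [nra|]. lra.
Qed.

Lemma final_real r mu d1 d2 T a2 :
  0 <= r -> 0 <= mu -> 0 <= T -> 0 <= d1 -> 0 <= d2 -> d1 + d2 <= mu ^ 2 ->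
  exp a2 * (exp (r ^ 2 * d1 + r ^ 2 * d2) *
   (r ^ 3 * exp (r * mu + r ^ 2 * mu ^ 2 / 2) * exp (r ^ 2 * mu ^ 2) * T * (d1 + d2)))
  <= r * T * exp (a2 + 4 * (r * mu + 1) ^ 3).
Proof.
  intros Hr Hmu HT Hd1 Hd2 Hd.
  replace (exp a2 * (exp (r ^ 2 * d1 + r ^ 2 * d2) *
   (r ^ 3 * exp (r * mu + r ^ 2 * mu ^ 2 / 2) * exp (r ^ 2 * mu ^ 2) * T * (d1 + d2))))
   with ((exp a2 * T * exp (r * mu + (r * mu) ^ 2 / 2) * exp ((r * mu) ^ 2)) *
         (exp (r ^ 2 * d1 + r ^ 2 * d2) * (r ^ 3 * (d1 + d2))))
   by (replace ((r * mu) ^ 2) with (r ^ 2 * mu ^ 2) by ring; ring).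
  assert (E1 : exp (r ^ 2 * d1 + r ^ 2 * d2) <= exp ((r * mu) ^ 2)).
  { apply exp_mono. replace ((r * mu) ^ 2) with (r ^ 2 * mu ^ 2) by ring.
    assert (0 <= r ^ 2) by apply pow2_ge_0. nra. }
  assert (E3 : r ^ 3 * (d1 + d2) <= r * exp ((r * mu) ^ 2)).
  { apply Rle_trans with (r * (r * mu) ^ 2).
    - replace (r ^ 3 * (d1 + d2)) with (r * (r ^ 2 * (d1 + d2))) by ring.
      apply Rmult_le_compat_l; auto. replace ((r * mu) ^ 2) with (r ^ 2 * mu ^ 2) by ring.
      assert (0 <= r ^ 2) by apply pow2_ge_0. nra.
    - apply Rmult_le_compat_l; auto. generalize (exp_ineq1_le ((r * mu) ^ 2)); lra. }
  set (X := r * mu) in *.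
  assert (HX : 0 <= X) by (unfold X; nra).
  assert (E4 : exp (r ^ 2 * d1 + r ^ 2 * d2) * (r ^ 3 * (d1 + d2)) <= exp (X ^ 2) * (r * exp (X ^ 2))).
  { apply Rmult_le_compat; [apply Rlt_le, exp_pos | apply Rmult_le_pos; [apply pow_le; auto | lra] | exact E1 | exact E3]. }
  assert (HP : 0 <= exp a2 * T * exp (X + X ^ 2 / 2) * exp (X ^ 2)).
  { generalize (exp_pos a2) (exp_pos (X + X ^ 2 / 2)) (exp_pos (X ^ 2)). intros.
    apply Rmult_le_pos; [apply Rmult_le_pos; [apply Rmult_le_pos|]|]; lra. }
  apply Rle_trans with ((exp a2 * T * exp (X + X ^ 2 / 2) * exp (X ^ 2)) * (exp (X ^ 2) * (r * exp (X ^ 2)))).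
  { apply Rmult_le_compat_l; [exact HP | exact E4]. }
  replace (exp a2 * T * exp (X + X ^ 2 / 2) * exp (X ^ 2) * (exp (X ^ 2) * (r * exp (X ^ 2))))
    with (r * T * exp (a2 + (X + X ^ 2 / 2) + X ^ 2 + X ^ 2 + X ^ 2))
    by (rewrite !exp_plus; ring).
  apply Rmult_le_compat_l; [nra|]. apply exp_mono.
  replace ((X + 1) ^ 3) with (X ^ 3 + 3 * X ^ 2 + 3 * X + 1) by ring.
  generalize (pow_le X 3 HX) (pow2_ge_0 X). lra.
Qed.

Lemma Cmod_zz z : Cmod (z * z)%C = Cmod z ^ 2.
Proof. rewrite Cmod_mult; ring. Qed.

Lemma Rabs_half x : Rabs (x / 2) = Rabs x / 2.
Proof. unfold Rdiv. rewrite Rabs_mult, (Rabs_right (/ 2)) by lra. auto. Qed.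

Lemma Re_Aw_le w z : in_Omega_hat w ->
  Re (Aw w z) <= Rabs (g1 w) * Cmod z + dl w / 2 * Cmod z ^ 2.
Proof.
  intros (_ & _ & Hd & _).
  eapply Rle_trans; [apply Re_le_Cmod|]. unfold Aw.
  eapply Rle_trans; [apply Cmod_triangle|].
  rewrite !Cmod_opp, !Cmod_mult, !Cmod_R, Rabs_half, (Rabs_right (dl w)) by lra. lra.
Qed.

Lemma Aw_diff_le w w' z :
  Cmod (Aw w' z - Aw w z)%C <= Rabs (g1 w - g1 w') * Cmod z + Rabs (dl w - dl w') / 2 * Cmod z ^ 2.
Proof.
  replace (Aw w' z - Aw w z)%C with
    (RtoC (g1 w - g1 w') * z + RtoC ((dl w - dl w') / 2) * (z * z))%C.
  - eapply Rle_trans; [apply Cmod_triangle|].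
    rewrite !Cmod_mult, !Cmod_R, Rabs_half. lra.
  - unfold Aw. apply injective_projections; simpl; field.
Qed.

Theorem proposition5p1 :
  exists L : R,
    forall (w w' : omega), in_Omega_hat w -> in_Omega_hat w' ->
    forall z : C,
      Cmod (Cminus (E w z) (E w' z)) <=
        exp (Rabs (g1 w) * Cmod z + 5 * dl w * (Cmod z) ^ 2) *
          (exp (Rabs (g1 w - g1 w') * Cmod z + Rabs (dl w - dl w') / 2 * (Cmod z) ^ 2) - 1)
      + Cmod z *
          cbrt (Series (fun i => Rabs (ap w i - ap w' i) ^ 3 + Rabs (am w i - am w' i) ^ 3)) *
          exp (Rabs (g1 w') * Cmod z + dl w' / 2 * (Cmod z) ^ 2
               + L * (Cmod z * (sqrt (dl w) + sqrt (dl w')) + 1) ^ 3).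
Proof.
  exists 4. intros w w' Hw Hw' z.
  destruct (Pt_conv w z Hw) as [P HP].
  destruct (Pt_conv w' z Hw') as [P' HP'].
  rewrite (E_repr w z P Hw HP), (E_repr w' z P' Hw' HP').
  change (fun i => Rabs (ap w i - ap w' i) ^ 3 + Rabs (am w i - am w' i) ^ 3) with (c3 w w').
  apply (is_Clim_le (fun N => Cexp (Aw w z) * Pt w z N - Cexp (Aw w' z) * Pt w' z N)%C).
  { apply is_Clim_minus; apply is_Clim_mult; auto; apply is_Clim_const. }
  intro N.
  set (A := Aw w z). set (A' := Aw w' z).
  set (r := Cmod z).
  set (T := cbrt (Series (c3 w w'))).
  set (D := Rabs (g1 w - g1 w') * r + Rabs (dl w - dl w') / 2 * r ^ 2).
  assert (HA' : Cexp A' = (Cexp A * Cexp (A' - A))%C).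
  { rewrite <- Cexp_add. f_equal. ring. }
  replace (Cexp A * Pt w z N - Cexp A' * Pt w' z N)%C with
    (- (Cexp A * (Cexp (A' - A) - RtoC 1) * Pt w z N) + Cexp A' * (Pt w z N - Pt w' z N))%C
    by (rewrite HA'; ring).
  eapply Rle_trans; [apply Cmod_triangle|]. rewrite Cmod_opp, !Cmod_mult, !Cmod_Cexp.
  assert (Hr : 0 <= r) by apply Cmod_ge_0.
  assert (Hd : 0 <= dl w) by apply Hw. assert (Hd' : 0 <= dl w') by apply Hw'.
  assert (X1 : exp (Re A) * Cmod (Cexp (A' - A) - RtoC 1)%C * Cmod (Pt w z N) <=
               exp (Rabs (g1 w) * r + 5 * dl w * r ^ 2) * (exp D - 1)).
  { assert (B1 : exp (Re A) <= exp (Rabs (g1 w) * r + dl w / 2 * r ^ 2))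
      by (apply exp_mono, Re_Aw_le; auto).
    assert (B2 : Cmod (Cexp (A' - A) - RtoC 1)%C <= exp D - 1).
    { eapply Rle_trans; [apply Cexp_bound1|]. apply Rplus_le_compat_r, exp_mono. apply Aw_diff_le. }
    assert (B3 := Pt_bound w z N Hw). fold r in B3.
    assert (0 <= exp D - 1) by (eapply Rle_trans; [apply Cmod_ge_0 | apply B2]).
    apply Rle_trans with (exp (Rabs (g1 w) * r + dl w / 2 * r ^ 2) * (exp D - 1) * exp (r ^ 2 * dl w)).
    - apply Rmult_le_compat; auto using Cmod_ge_0.
      + apply Rmult_le_pos; [apply Rlt_le, exp_pos | apply Cmod_ge_0].
      + apply Rmult_le_compat; auto using Cmod_ge_0. apply Rlt_le, exp_pos.
    - replace (exp (Rabs (g1 w) * r + dl w / 2 * r ^ 2) * (exp D - 1) * exp (r ^ 2 * dl w))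
        with (exp (Rabs (g1 w) * r + dl w / 2 * r ^ 2 + r ^ 2 * dl w) * (exp D - 1))
        by (rewrite exp_plus; ring).
      apply Rmult_le_compat_r; auto. apply exp_mono.
      assert (0 <= r ^ 2) by apply pow2_ge_0. nra. }
  assert (X2 : exp (Re A') * Cmod (Pt w z N - Pt w' z N)%C <=
               r * T * exp (Rabs (g1 w') * r + dl w' / 2 * r ^ 2 + 4 * (r * (sqrt (dl w) + sqrt (dl w')) + 1) ^ 3)).
  { assert (B1 : exp (Re A') <= exp (Rabs (g1 w') * r + dl w' / 2 * r ^ 2))
      by (apply exp_mono, Re_Aw_le; auto).
    assert (B2 := Pt_diff w w' z N Hw Hw'). simpl in B2. fold r T in B2.
    assert (HT : 0 <= T).
    { eapply Rle_trans; [apply Rabs_pos|]. apply (delta_le_T w w' O Hw Hw'). }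
    eapply Rle_trans.
    { apply Rmult_le_compat; [apply Rlt_le, exp_pos | apply Cmod_ge_0 | exact B1 | exact B2]. }
    apply final_real; auto.
    - generalize (sqrt_pos (dl w)) (sqrt_pos (dl w')); lra.
    - rewrite <- (sqrt_sqrt (dl w)) at 1 by auto. rewrite <- (sqrt_sqrt (dl w')) at 1 by auto.
      generalize (sqrt_pos (dl w)) (sqrt_pos (dl w')). intros. nra. }
  fold r. lra.
Qed.
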